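(* Let $n\geq 2$, let $\mathbf{K},\mathbf{L}\in\mathbb{R}^{n\times n}$ be skew-symmetric matrices and let $S_1,S_2:\mathbb{R}^n\to\mathbb{R}$ be smooth functions. Consider the stochastic Runge-Kutta method described in the context (with $r$ stages in time, coefficients $a_{kj},b_k$, and $s$ stages in space, coefficients $\widetilde{a}_{mn},\widetilde{b}_m$), applied with time step $\tau>0$ and space step $h>0$ to $$\mathbf{K}\,{\rm d}_t z+\mathbf{L}z_x\,{\rm d}t=\nabla_z S_1(z)\,{\rm d}t+\nabla_z S_2(z)\circ {\rm d}W(t).$$ Assume that $$b_kb_j-b_ka_{kj}-b_ja_{jk}=0\quad\text{and}\quad \widetilde{b}_m\widetilde{b}_n-\widetilde{b}_m\widetilde{a}_{mn}-\widetilde{b}_n\widetilde{a}_{nm}=0$$ for all $k,j=1,\dots,r$ and all $m,n=1,\dots,s$. Then on every space-time cell (for all $p=0,1,\dots,P$ and $i=0,1,\dots,I$) the method satisfies, almost surely, the discrete stochastic multi-symplectic conservation law $$\frac{\omega^{p+1}-\omega^{p}}{\tau}+\frac{\kappa_{i+1}-\kappa_{i}}{h}=0,$$ where $$\omega^p=\frac{1}{2}\sum_{m=1}^s\widetilde{b}_m\,{\rm d}z_{m}^{p}\wedge \mathbf{K}\,{\rm d}z_{m}^{p},\qquad \kappa_{i}=\frac{1}{2}\sum_{k=1}^rb_k\,{\rm d}z_{i}^{k}\wedge \mathbf{L}\,{\rm d}z_{i}^{k},$$ and $\omega^{p+1},\kappa_{i+1}$ are defined analogously with $z_m^{p+1}$,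 $z_{i+1}^k$.
   Context: The equation is understood in the Stratonovich sense; $W$ is a $Q$-Wiener process on $H=L^2(\mathbb{R},\mathbb{R})$ with trace-class covariance $Q$ on a filtered probability space $(\Omega,\mathcal{F},P,\{\mathcal{F}_t\})$, with $Qe_j=\eta_je_j$ for an orthonormal basis $(e_j)$ and independent real Brownian motions $\beta_j$. The stochastic Runge-Kutta method: on a space-time cell $[x_i,x_{i+1}]\times[t_p,t_{p+1}]$ (with $x_{i+1}-x_i=h$, $t_{p+1}-t_p=\tau$) the unknowns are stage values $Z_m^k\in\mathbb{R}^n$ ($m=1,\dots,s$, $k=1,\dots,r$), discrete derivative values $\delta_tZ_m^k,\delta_xZ_m^k\in\mathbb{R}^n$, values $z_m^p,z_m^{p+1}\in\mathbb{R}^n$ (at time levels $t_p,t_{p+1}$ and spatial stage $m$) and $z_i^k,z_{i+1}^k\in\mathbb{R}^n$ (at spatial nodes $x_i,x_{i+1}$ and temporal stage $k$), related by $Z_{m}^{k}=z_{m}^{p}+\tau\sum_{j=1}^{r}a_{kj}\delta_tZ_{m}^{j}$, $z_{m}^{p+1}=z_{m}^{p}+\tau\sum_{k=1}^{r}b_{k}\delta_tZ_{m}^{k}$, $Z_{m}^{k}=z_{i}^{k}+h\sum_{n=1}^{s}\widetilde{a}_{mn}\delta_{x}Z_{n}^{k}$, $z_{i+1}^{k}=z_{i}^{k}+h\sum_{m=1}^{s}\widetilde{b}_{m}\delta_{x}Z_{m}^{k}$, $\tau\mathbf{K}\delta_{t}Z_{m}^{k}+\tau\mathbf{L}\delta_{x}Z_{m}^{k}=\tau\nabla_{z}S_1(Z_{m}^{k})+\nabla_{z}S_2(Z_{m}^{k})\Delta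 W_m^k$, where $\Delta W_m^k=\sum_{j=1}^\infty\sqrt{\eta_j}e_j(x_m)(\beta_j(t^{k+1})-\beta_j(t^{k}))$ is the Wiener increment at the stage point. Here ${\rm d}$ denotes the exterior differential in phase space (variations of the numerical solution with respect to initial data), and for a matrix $\mathbf{M}$, ${\rm d}z\wedge\mathbf{M}{\rm d}z=\sum_{a,b}\mathbf{M}_{ab}\,{\rm d}z_a\wedge{\rm d}z_b$. *)

(* Defs.v *)
From HB Require Import structures.
From mathcomp Require Import all_boot all_order all_algebra.
From mathcomp Require Import all_classical all_reals all_analysis.
Set Implicit Arguments. Unset Strict Implicit. Unset Printing Implicit Defensive.
Import Order.TTheory GRing.Theory Num.Theory.
Import numFieldNormedType.Exports.
Local Open Scope ring_scope.

Fixpoint iter_dderiv (R : realType) (V : normedModType R) (f : V -> R)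
  (vs : seq V) : V -> R :=
  match vs with
  | [::] => f
  | v :: vs' => fun x => 'D_v (iter_dderiv f vs') x
  end.

Definition smooth (R : realType) (V : normedModType R) (f : V -> R) : Prop :=
  forall (vs : seq V) (x : V), differentiable (iter_dderiv f vs) x.

Definition grad (R : realType) (n : nat) (S : 'cV[R]_n -> R) (z : 'cV[R]_n)
  : 'cV[R]_n :=
  \col_(a < n) 'D_(delta_mx a 0) S z.

(* The exterior differential of a phase-space quantity z (a function of the
   initial data theta in V) at theta is the linear map  'd z theta.
   For one-forms u, v with values in R^n (given as linear maps V -> R^n),
   (u /\ M v)(xi, eta) = sum_{a,b} M_ab (u_a(xi) v_b(eta) - u_a(eta) v_b(xi)),
   i.e.  dz /\ M dz = sum_{a,b} M_ab dz_a /\ dz_b  evaluated on (xi, eta). *)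
Definition wedgeM (R : realType) (V : normedModType R) (n : nat)
  (u : V -> 'cV[R]_n) (M : 'M[R]_n) (v : V -> 'cV[R]_n) (xi eta : V) : R :=
  \sum_(a < n) \sum_(b < n) M a b * (u xi a 0 * v eta b 0 - u eta a 0 * v xi b 0).

Definition form2 (R : realType) (V : normedModType R) (n : nat)
  (z : V -> 'cV[R]_n) (M : 'M[R]_n) (theta : V) (xi eta : V) : R :=
  wedgeM ('d z theta) M ('d z theta) xi eta.

(* Main.v *)
Require Import Defs.
From HB Require Import structures.
From mathcomp Require Import all_boot all_order all_algebra.
From mathcomp Require Import all_classical all_reals all_analysis.
From mathcomp Require Import ring lra.
Import Order.TTheory GRing.Theory Num.Theory.
Import numFieldNormedType.Exports.
Local Open Scope ring_scope.

Section Clairaut.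
Variables (R : realType) (U : normedModType R).
Local Open Scope classical_set_scope.
Local Open Scope ring_scope.

Lemma line_derive {f : U -> R} {p u : U} {s : R} :
  differentiable f (p + s *: u) ->
  is_derive s 1 (fun t : R => f (p + t *: u)) ('D_u f (p + s *: u)).
Proof.
move=> df.
have hl : forall t : R, is_diff t (fun t : R => p + t *: u) ( *:%R ^~ u).
  move=> t.
  have -> : (fun t : R => p + t *: u) = cst p + ( *:%R ^~ u) by [].
  apply: (is_diff_eq (is_diffD (is_diff_cst p t) (is_diff_scalel t u))).
  by apply/funext => y; rewrite /= add0r.
have dl : differentiable (fun t : R => p + t *: u) s by [].
have dc : differentiable (f \o (fun t : R => p + t *: u)) s.
  exact: differentiable_comp.
apply: DeriveDef; first exact: diff_derivable.
rewrite (deriveE _ dc) diff_comp // (deriveE _ df) /=.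
by rewrite diff_val scale1r.
Qed.

Lemma MVT_line (f : U -> R) (p u : U) (t : R) : 0 < t ->
  (forall y, differentiable f y) ->
  exists2 c, 0 < c < t & f (p + t *: u) - f p = t * 'D_u f (p + c *: u).
Proof.
move=> t0 H.
have hd : forall s : R, is_derive s 1 (fun s : R => f (p + s *: u)) ('D_u f (p + s *: u)).
  by move=> s; apply: line_derive.
have hc : {within `[0, t], continuous (fun s : R => f (p + s *: u))}.
  apply: continuous_subspaceT => s.
  apply: differentiable_continuous; apply/derivable1_diffP.
  by have [] := hd s.
have [c cI E] := MVT t0 (fun s _ => hd s) hc.
exists c; first by move: cI; rewrite in_itv.
by rewrite scale0r addr0 in E; rewrite E subr0 mulrC.
Qed.
Lemma MVT_line2 (f : U -> R) (p1 p2 u : U) (t : R) : 0 < t ->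
  (forall y, differentiable f y) ->
  exists2 c, 0 < c < t & (f (p1 + t *: u) - f (p2 + t *: u)) - (f p1 - f p2)
     = t * ('D_u f (p1 + c *: u) - 'D_u f (p2 + c *: u)).
Proof.
move=> t0 H.
have hd : forall s : R, is_derive s 1 (fun s : R => f (p1 + s *: u) - f (p2 + s *: u))
   ('D_u f (p1 + s *: u) - 'D_u f (p2 + s *: u)).
  move=> s; have h1 := line_derive (H (p1 + s *: u)).
  have h2 := line_derive (H (p2 + s *: u)).
  exact: (is_deriveB h1 h2).
have hc : {within `[0, t], continuous (fun s : R => f (p1 + s *: u) - f (p2 + s *: u))}.
  apply: continuous_subspaceT => s.
  apply: differentiable_continuous; apply/derivable1_diffP.
  by have [] := hd s.
have [c cI E] := MVT t0 (fun s _ => hd s) hc.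
exists c; first by move: cI; rewrite in_itv.
by rewrite !scale0r !addr0 in E; rewrite E subr0 mulrC.
Qed.

Definition Delta (f : U -> R) (x a b : U) := f (x + a + b) - f (x + a) - f (x + b) + f x.

Lemma Delta_sym f x a b : Delta f x a b = Delta f x b a.
Proof.
rewrite /Delta (addrAC x).
set A := f _; set B := f (x + a); set C := f (x + b); ring.
Qed.

Lemma mixed (f : U -> R) (u v x : U) (t : R) : 0 < t ->
  (forall y, differentiable f y) -> (forall y, differentiable ('D_u f) y) ->
  exists q, `|q - x| <= t * (`|u| + `|v|) /\
    Delta f x (t *: u) (t *: v) = t * t * 'D_v ('D_u f) q.
Proof.
move=> t0 Hf Hu.
have [c1 /andP[c10 c1t] E1] := MVT_line2 f (x + t *: v) x u t t0 Hf.
have [c2 /andP[c20 c2t] E2] := MVT_line ('D_u f) (x + c1 *: u) v t t0 Hu.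
exists (x + c1 *: u + c2 *: v); split.
  rewrite addrAC (addrAC x) subrr add0r.
  apply: (le_trans (ler_normD _ _)); rewrite !normrZ mulrDr.
  by rewrite lerD // ler_wpM2r // ger0_norm ?ltW.
have -> : Delta f x (t *: u) (t *: v)
   = (f (x + t *: v + t *: u) - f (x + t *: u)) - (f (x + t *: v) - f x).
  rewrite /Delta (addrAC x).
  set A := f _; set B := f (x + t *: u); set C := f (x + t *: v); ring.
rewrite E1 -mulrA; congr (_ * _).
by rewrite -E2 (addrAC x).
Qed.

Lemma near_ball (G : U -> R) (x : U) (e : R) : 0 < e ->
  differentiable G x -> exists2 d, 0 < d & forall y, `|x - y| < d -> `|G x - G y| < e.
Proof.
move=> e0 /differentiable_continuous /cvgrPdist_lt /(_ e e0) /nbhs_ballP [d d0 H].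
exists d => // y xy; apply: H.
by rewrite -ball_normE /ball_ /=.
Qed.

Lemma approx_lt (d c : R) : 0 < d -> 0 <= c -> d / (c + 1) * c < d.
Proof.
move=> d0 c0.
have N0 : 0 < c + 1 by rewrite ltr_wpDl.
rewrite mulrAC ltr_pdivrMr // ltr_pM2l //.
by rewrite ltrDl.
Qed.

Lemma eq_by_approx (G1 G2 : U -> R) (x : U) (c : R) : 0 <= c ->
  differentiable G1 x -> differentiable G2 x ->
  (forall t, 0 < t -> exists q1, exists q2,
     [/\ `|q1 - x| <= t * c, `|q2 - x| <= t * c & G1 q1 = G2 q2]) ->
  G1 x = G2 x.
Proof.
move=> c0 D1 D2 key.
apply/eqP; apply/negPn/negP => Hne.
have d0 : 0 < `|G1 x - G2 x| / 2 by rewrite divr_gt0 // normr_gt0 subr_eq0.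
have [d1 d10 H1] := near_ball G1 x _ d0 D1.
have [d2 d20 H2] := near_ball G2 x _ d0 D2.
have dpos : 0 < Num.min d1 d2 by rewrite lt_min d10 d20.
have N0 : 0 < c + 1 by rewrite ltr_wpDl.
have t0 : 0 < Num.min d1 d2 / (c + 1) by rewrite divr_gt0.
have [q1 [q2 [h1 h2 E]]] := key _ t0.
have lt := approx_lt _ _ dpos c0.
have q1x : `|x - q1| < d1.
  rewrite distrC; apply: (le_lt_trans h1); apply: (lt_le_trans lt).
  by rewrite ge_min lexx.
have q2x : `|x - q2| < d2.
  rewrite distrC; apply: (le_lt_trans h2); apply: (lt_le_trans lt).
  by rewrite ge_min lexx orbT.
have A := H1 _ q1x; have B := H2 _ q2x.
have HD : `|G1 x - G2 x| <= `|G1 x - G1 q1| + `|G2 x - G2 q2|.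
  have -> : G1 x - G2 x = (G1 x - G1 q1) - (G2 x - G2 q2) by rewrite E opprB addrA subrK.
  exact: ler_normB.
have := le_lt_trans HD (ltrD A B).
by rewrite -splitr ltxx.
Qed.

Lemma clairaut (f : U -> R) (u v x : U) :
  (forall y, differentiable f y) ->
  (forall y, differentiable ('D_u f) y) -> (forall y, differentiable ('D_v f) y) ->
  (forall y, differentiable ('D_v ('D_u f)) y) ->
  (forall y, differentiable ('D_u ('D_v f)) y) ->
  'D_v ('D_u f) x = 'D_u ('D_v f) x.
Proof.
move=> Hf Hu Hv Hvu Huv.
apply: (@eq_by_approx ('D_v ('D_u f)) ('D_u ('D_v f)) x (`|u| + `|v|)).
- by rewrite addr_ge0.
- exact: Hvu.
- exact: Huv.
move=> t t0.
have [q1 [h1 E1]] := mixed f u v x t t0 Hf Hu.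
have [q2 [h2 E2]] := mixed f v u x t t0 Hf Hv.
exists q1, q2; split; [exact: h1|by rewrite (addrC `|u|)|].
have tt0 : t * t != 0 by rewrite mulf_neq0 // gt_eqF.
apply: (mulfI tt0); rewrite -E1 -E2; exact: Delta_sym.
Qed.
End Clairaut.


Section Diffs.
Variables (R : realType) (V : normedModType R).

Lemma diff_add_app {W : normedModType R} (f g : V -> W) (x d : V) :
  differentiable f x -> differentiable g x -> 'd (f + g) x d = 'd f x d + 'd g x d.
Proof. by move=> Df Dg; rewrite diffD. Qed.

Lemma diff_scale_app {W : normedModType R} (f : V -> W) (c : R) (x d : V) :
  differentiable f x -> 'd (c *: f) x d = c *: 'd f x d.
Proof. by move=> Df; rewrite diffZ. Qed.

Lemma diff_sum {W : normedModType R} {k : nat} (F : 'I_k -> V -> W) (x d : V) :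
  (forall i, differentiable (F i) x) ->
  differentiable (fun y => \sum_(i < k) F i y) x /\
  'd (fun y => \sum_(i < k) F i y) x d = \sum_(i < k) 'd (F i) x d.
Proof.
elim: k F => [|k IH] F HF.
  have -> : (fun y => \sum_(i < 0) F i y) = cst 0.
    by apply/funext => y; rewrite big_ord0.
  split; first exact: differentiable_cst.
  by rewrite diff_cst big_ord0.
have -> : (fun y => \sum_(i < k.+1) F i y) =
   (fun y => \sum_(i < k) F (widen_ord (leqnSn k) i) y) + F ord_max.
  by apply/funext => y; rewrite big_ord_recr.
have [D1 E1] := IH (fun i => F (widen_ord (leqnSn k) i)) (fun i => HF _).
split; first exact: differentiableD.
rewrite (diff_add_app _ _ _ d D1 (HF ord_max)).
by rewrite E1 [RHS]big_ord_recr.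
Qed.

Lemma diff_aff (W : normedModType R) (k : nat) (f g : V -> W) (c : R) (w : 'I_k -> R)
  (F : 'I_k -> V -> W) (x d : V) :
  (forall y, f y = g y + c *: \sum_(i < k) w i *: F i y) ->
  differentiable g x -> (forall i, differentiable (F i) x) ->
  'd f x d = 'd g x d + c *: \sum_(i < k) w i *: 'd (F i) x d.
Proof.
move=> Hf Dg DF.
have DF' : forall i, differentiable (fun y => w i *: F i y) x.
  by move=> i; exact: (differentiableZ (w i) (DF i)).
have [D1 E1] := diff_sum (fun i y => w i *: F i y) x d DF'.
have -> : f = g + c *: (fun y => \sum_(i < k) (fun y => w i *: F i y) y).
  by apply/funext => y; rewrite Hf.
rewrite (diff_add_app _ _ _ d Dg (differentiableZ c D1)) (diff_scale_app _ c _ d D1) E1; congr (_ + _ *: _).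
apply: eq_bigr => i _.
exact: (diff_scale_app _ (w i) _ d (DF i)).
Qed.

End Diffs.


Section Diffs2.
Variables (R : realType) (V : normedModType R).
Lemma diff_coord (p q : nat) (F : V -> 'M[R]_(p, q)) (x d : V) (i : 'I_p) (j : 'I_q) :
  differentiable F x -> 'd F x d i j = 'd (fun y => F y i j) x d.
Proof.
move=> DF.
have @cf : {linear 'M[R]_(p, q) -> R}.
  by exists (fun N : 'M[R]_(_, _) => N i j); do 2![eexists]; do ?[constructor];
     rewrite ?mxE// => ? *; rewrite ?mxE//; move=> ?; rewrite !mxE.
have cfc : continuous cf by exact: coord_continuous.
have -> : (fun y => F y i j) = cf \o F by [].
rewrite [in RHS]diff_comp //; last exact: (linear_differentiable _ cfc).
by rewrite diff_lin.
Qed.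

Lemma differentiable_entry (p q : nat) (F : V -> 'M[R]_(p, q)) (x : V) (i : 'I_p) (j : 'I_q) :
  differentiable F x -> differentiable (fun y => F y i j) x.
Proof.
move=> DF; have -> : (fun y => F y i j) = (fun N : 'M[R]_(p, q) => N i j) \o F by [].
apply: differentiable_comp => //; exact: differentiable_coord.
Qed.

Lemma col_sum_delta (n : nat) (v : 'cV[R]_n) : v = \sum_(a < n) v a 0 *: delta_mx a 0.
Proof.
by rewrite {1}(matrix_sum_delta v); apply: eq_bigr => a _; rewrite big_ord1.
Qed.

Lemma diffR_lin (k : nat) (A : 'I_k -> R) (u : 'I_k -> V -> R) (x d : V) :
  (forall c, differentiable (u c) x) ->
  differentiable (fun y => \sum_(c < k) A c * u c y) x /\
  'd (fun y => \sum_(c < k) A c * u c y) x d = \sum_(c < k) A c * 'd (u c) x d.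
Proof.
move=> Du.
have DF : forall c, differentiable (A c *: u c) x.
  by move=> c; exact: differentiableZ.
have [D1 E1] := @diff_sum R V _ _ (fun c => A c *: u c) x d DF.
split; first exact: D1.
rewrite E1; apply: eq_bigr => c _.
exact: (diff_scale_app R V _ (A c) _ d (Du c)).
Qed.

Lemma diffR_add (f g : V -> R) (c1 c2 : R) (x d : V) :
  differentiable f x -> differentiable g x ->
  differentiable (fun y => c1 * f y + c2 * g y) x /\
  'd (fun y => c1 * f y + c2 * g y) x d = c1 * 'd f x d + c2 * 'd g x d.
Proof.
move=> Df Dg.
have D1 : differentiable (c1 *: f) x by exact: differentiableZ.
have D2 : differentiable (c2 *: g) x by exact: differentiableZ.
split; first exact: (differentiableD D1 D2).
rewrite (diff_add_app R V _ _ _ d D1 D2).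
by rewrite (diff_scale_app R V _ c1 _ d Df) (diff_scale_app R V _ c2 _ d Dg).
Qed.

Lemma rel_vec (n k : nat) (f g : V -> 'cV[R]_n) (c : R) (w : 'I_k -> R)
  (F : 'I_k -> V -> 'cV[R]_n) (x d : V) :
  (forall y, f y = g y + c *: \sum_(i < k) w i *: F i y) ->
  differentiable f x -> differentiable g x -> (forall i, differentiable (F i) x) ->
  'd f x d = 'd g x d + c *: \sum_(i < k) w i *: 'd (F i) x d.
Proof.
move=> Hf Df Dg DF.
apply/matrixP => a j0; rewrite (ord1 j0) (diff_coord _ _ _ _ d a 0 Df).
have Ef : (fun y => f y a 0) =
    (fun y => 1 * g y a 0 + c * (\sum_(i < k) w i * (fun i y => F i y a 0) i y)).
  apply/funext => y; rewrite Hf !mxE summxE mul1r; congr (_ + _ * _).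
  by apply: eq_bigr => i _; rewrite mxE.
have DFa : forall i, differentiable ((fun i y => F i y a 0) i) x.
  by move=> i; exact: differentiable_entry.
have [D1 E1] := diffR_lin _ w _ _ d DFa.
have [D2 E2] := diffR_add _ _ 1 c _ d (differentiable_entry _ _ _ _ a 0 Dg) D1.
rewrite Ef E2 E1 mul1r !mxE summxE (diff_coord _ _ _ _ d a 0 Dg).
congr (_ + _ * _); apply: eq_bigr => i _.
by rewrite mxE (diff_coord _ _ _ _ d a 0 (DF i)).
Qed.

Definition hess {n : nat} (S : 'cV[R]_n -> R) (z : 'cV[R]_n) : 'M[R]_n :=
  \matrix_(a, b) 'D_(delta_mx b 0) ('D_(delta_mx a 0) S) z.


Lemma grad_entry_diff (n : nat) (S : 'cV[R]_n -> R) (Z : V -> 'cV[R]_n) (x d : V) (a : 'I_n) :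
  smooth S -> differentiable Z x ->
  differentiable (fun y => 'D_(delta_mx a 0) S (Z y)) x /\
  'd (fun y => 'D_(delta_mx a 0) S (Z y)) x d
   = \sum_(b < n) hess S (Z x) a b * 'd Z x d b 0.
Proof.
move=> HS DZ.
have Dg : forall z, differentiable (fun z => 'D_(delta_mx a 0) S z) z.
  by move=> z; exact: (HS [:: delta_mx a 0] z).
have Dga : differentiable ((fun z => 'D_(delta_mx a 0) S z) \o Z) x.
  exact: (differentiable_comp DZ (Dg (Z x))).
split; first exact: Dga.
have -> : (fun y => 'D_(delta_mx a 0) S (Z y)) = (fun z => 'D_(delta_mx a 0) S z) \o Z by [].
rewrite (diff_comp DZ (Dg (Z x))) /=.
rewrite [in LHS](col_sum_delta _ ('d Z x d)).
rewrite (linear_sum ('d (fun z => 'D_(delta_mx a 0) S z) (Z x))).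
apply: eq_bigr => b _.
rewrite linearZ -(deriveE _ (Dg (Z x))) mxE.
exact: mulrC.
Qed.

Lemma vec_from_entries (n : nat) (K L H1 H2 : 'M[R]_n) (tau w : R) (T X Z : 'cV[R]_n) :
  (forall a : 'I_n,
    tau * (\sum_(c < n) K a c * T c 0) + tau * (\sum_(c < n) L a c * X c 0)
    = tau * (\sum_(b < n) H1 a b * Z b 0) + w * (\sum_(b < n) H2 a b * Z b 0)) ->
  tau *: (K *m T) + tau *: (L *m X) = tau *: (H1 *m Z) + w *: (H2 *m Z).
Proof.
move=> key; apply/matrixP => a j0; rewrite (ord1 j0) !mxE.
exact: key.
Qed.

Lemma deq (n : nat) (K L : 'M[R]_n) (S1 S2 : 'cV[R]_n -> R) (tau w : R)
  (T X Z : V -> 'cV[R]_n) (x d : V) :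
  smooth S1 -> smooth S2 -> differentiable T x -> differentiable X x -> differentiable Z x ->
  (forall y, tau *: (K *m T y) + tau *: (L *m X y) = tau *: grad S1 (Z y) + w *: grad S2 (Z y)) ->
  tau *: (K *m 'd T x d) + tau *: (L *m 'd X x d)
  = tau *: (hess S1 (Z x) *m 'd Z x d) + w *: (hess S2 (Z x) *m 'd Z x d).
Proof.
move=> HS1 HS2 DT DX DZ Heq.
have key : forall a : 'I_n,
  tau * (\sum_(c < n) K a c * 'd T x d c 0) + tau * (\sum_(c < n) L a c * 'd X x d c 0)
  = tau * (\sum_(b < n) hess S1 (Z x) a b * 'd Z x d b 0)
    + w * (\sum_(b < n) hess S2 (Z x) a b * 'd Z x d b 0).
  move=> a.
  have E : (fun y => tau * (\sum_(c < n) K a c * (fun c y => T y c 0) c y)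
                 + tau * (\sum_(c < n) L a c * (fun c y => X y c 0) c y))
       = (fun y => tau * 'D_(delta_mx a 0) S1 (Z y) + w * 'D_(delta_mx a 0) S2 (Z y)).
    apply/funext => y.
    have := congr1 (fun M : 'cV[R]_n => M a 0) (Heq y).
    by rewrite /= !mxE.
  have DTa : forall c, differentiable ((fun c y => T y c 0) c) x.
    by move=> c; exact: differentiable_entry.
  have DXa : forall c, differentiable ((fun c y => X y c 0) c) x.
    by move=> c; exact: differentiable_entry.
  have [D1 E1] := diffR_lin _ (K a) _ _ d DTa.
  have [D2 E2] := diffR_lin _ (L a) _ _ d DXa.
  have [D3 E3] := diffR_add _ _ tau tau _ d D1 D2.
  have [G1 F1] := grad_entry_diff _ _ _ _ d a HS1 DZ.
  have [G2 F2] := grad_entry_diff _ _ _ _ d a HS2 DZ.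
  have [D4 E4] := diffR_add _ _ tau w _ d G1 G2.
  have E' := f_equal (fun f => 'd f x d) E.
  cbv beta in E'.
  apply: (etrans _ (etrans E' _)).
    rewrite E3 E1 E2.
    congr (_ * _ + _ * _); apply: eq_bigr => c _; symmetry.
      congr (_ * _); symmetry; exact: (diff_coord _ _ _ _ d c 0 DT).
    congr (_ * _); symmetry; exact: (diff_coord _ _ _ _ d c 0 DX).
  rewrite E4; congr (_ * _ + _ * _); [exact: F1 | exact: F2].
apply: vec_from_entries; exact: key.
Qed.
End Diffs2.


Section Bil.
Variables (R : realType) (n : nat).
Implicit Types (M : 'M[R]_n) (x y z : 'cV[R]_n).

Definition bil M x y : R := (x^T *m M *m y) 0 0.

Lemma bilDl M x y z : bil M (x + y) z = bil M x z + bil M y z.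
Proof. by rewrite /bil linearD /= !mulmxDl mxE. Qed.
Lemma bilDr M x y z : bil M x (y + z) = bil M x y + bil M x z.
Proof. by rewrite /bil mulmxDr mxE. Qed.
Lemma bilZl M c x y : bil M (c *: x) y = c * bil M x y.
Proof. by rewrite /bil linearZ /= -!scalemxAl mxE. Qed.
Lemma bilZr M c x y : bil M x (c *: y) = c * bil M x y.
Proof. by rewrite /bil -scalemxAr mxE. Qed.
Lemma bil_suml M k (F : 'I_k -> 'cV[R]_n) y :
  bil M (\sum_(i < k) F i) y = \sum_(i < k) bil M (F i) y.
Proof.
apply: (big_rec2 (fun a b => bil M b y = a)).
  by rewrite /bil linear0 !mul0mx mxE.
by move=> i a b _ <-; rewrite bilDl.
Qed.
Lemma bil_sumr M k (F : 'I_k -> 'cV[R]_n) x :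
  bil M x (\sum_(i < k) F i) = \sum_(i < k) bil M x (F i).
Proof.
apply: (big_rec2 (fun a b => bil M x b = a)).
  by rewrite /bil mulmx0 mxE.
by move=> i a b _ <-; rewrite bilDr.
Qed.

Lemma bil_tr' M x y : bil M x y = bil M^T y x.
Proof.
have -> : bil M x y = ((x^T *m M *m y)^T) 0 0 by rewrite mxE.
by rewrite !trmx_mul trmxK mulmxA.
Qed.

Lemma bil_skew M x y : M^T = - M -> bil M x y = - bil M y x.
Proof.
move=> HM; rewrite bil_tr' HM /bil mulmxN mulNmx mxE //.
Qed.

Lemma bil_sym M x y : M^T = M -> bil M x y = bil M y x.
Proof. by move=> HM; rewrite bil_tr' HM. Qed.

Lemma wedge_bil (V : normedModType R) (u v : V -> 'cV[R]_n) M xi eta :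
  wedgeM u M v xi eta = bil M (u xi) (v eta) - bil M (u eta) (v xi).
Proof.
have E : forall a b : 'cV[R]_n, bil M a b = \sum_(i < n) \sum_(j < n) M i j * (a i 0 * b j 0).
  move=> a b; rewrite /bil mxE; under eq_bigr => j _ do rewrite mxE big_distrl /=.
  rewrite exchange_big /=; apply: eq_bigr => i _; apply: eq_bigr => j _.
  by rewrite mxE; ring.
rewrite /wedgeM !E -sumrB; apply: eq_bigr => i _; rewrite -sumrB.
by apply: eq_bigr => j _; ring.
Qed.

Lemma bil_mats K L x T X : bil K x T + bil L x X = (x^T *m (K *m T + L *m X)) 0 0.
Proof. by rewrite /bil mulmxDr !mulmxA [in RHS]mxE. Qed.
Lemma bil_sumZl M k (c : 'I_k -> R) (F : 'I_k -> 'cV[R]_n) y :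
  bil M (\sum_(i < k) c i *: F i) y = \sum_(i < k) c i * bil M (F i) y.
Proof. by rewrite bil_suml; apply: eq_bigr => i _; rewrite bilZl. Qed.
Lemma bil_sumZr M k (c : 'I_k -> R) (F : 'I_k -> 'cV[R]_n) x :
  bil M x (\sum_(i < k) c i *: F i) = \sum_(i < k) c i * bil M x (F i).
Proof. by rewrite bil_sumr; apply: eq_bigr => i _; rewrite bilZr. Qed.

Lemma rk_step M k (b : 'I_k -> R) (a : 'M[R]_k) (t : R)
  (Px Py P1x P1y : 'cV[R]_n) (Zx Zy Tx Ty : 'I_k -> 'cV[R]_n) :
  M^T = - M ->
  (forall i j, b i * b j - b i * a i j - b j * a j i = 0) ->
  P1x = Px + t *: \sum_(i < k) b i *: Tx i ->
  P1y = Py + t *: \sum_(i < k) b i *: Ty i ->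
  (forall i, Zx i = Px + t *: \sum_(j < k) a i j *: Tx j) ->
  (forall i, Zy i = Py + t *: \sum_(j < k) a i j *: Ty j) ->
  bil M P1x P1y - bil M Px Py
  = t * \sum_(i < k) b i * (bil M (Zx i) (Ty i) - bil M (Zy i) (Tx i)).
Proof.
move=> skew cond H1x H1y HZx HZy.
pose beta i j := bil M (Tx i) (Ty j).
have A1 : forall i, bil M Px (Ty i)
    = bil M (Zx i) (Ty i) - t * \sum_(j < k) a i j * beta j i.
  by move=> i; rewrite HZx bilDl bilZl bil_sumZl addrK.
have A2 : forall i, bil M (Tx i) Py
    = - bil M (Zy i) (Tx i) - t * \sum_(j < k) a i j * beta i j.
  by move=> i; rewrite -bil_skew // HZy bilDr bilZr bil_sumZr addrK.
have A3 : bil M P1x P1y - bil M Px Py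
    = t * \sum_(i < k) b i * (bil M Px (Ty i) + bil M (Tx i) Py)
      + t * t * \sum_(i < k) \sum_(j < k) b i * b j * beta i j.
  rewrite H1x H1y !bilDl !bilDr !bilZl !bilZr bil_sumZl bil_sumZr bil_sumZl.
  have -> : \sum_(i < k) b i * bil M (Tx i) (\sum_(j < k) b j *: Ty j)
      = \sum_(i < k) \sum_(j < k) b i * b j * beta i j.
    apply: eq_bigr => i _; rewrite bil_sumZr mulr_sumr.
    by apply: eq_bigr => j _; rewrite mulrA.
  have -> : \sum_(i < k) b i * (bil M Px (Ty i) + bil M (Tx i) Py)
      = \sum_(i < k) b i * bil M Px (Ty i) + \sum_(i < k) b i * bil M (Tx i) Py.
    by rewrite -big_split; apply: eq_bigr => i _; rewrite mulrDr.
  ring.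
have A4 : \sum_(i < k) b i * \sum_(j < k) a i j * beta j i
        + \sum_(i < k) b i * \sum_(j < k) a i j * beta i j
        = \sum_(i < k) \sum_(j < k) b i * b j * beta i j.
  have -> : \sum_(i < k) b i * \sum_(j < k) a i j * beta j i
      = \sum_(i < k) \sum_(j < k) b j * a j i * beta i j.
    under eq_bigr do rewrite mulr_sumr.
    rewrite exchange_big /=; apply: eq_bigr => i _; apply: eq_bigr => j _.
    by rewrite mulrA.
  rewrite -big_split; apply: eq_bigr => i _ /=; rewrite mulr_sumr -big_split.
  apply: eq_bigr => j _ /=.
  apply/eqP; rewrite -subr_eq0.
  have -> : b j * a j i * beta i j + b i * (a i j * beta i j) - b i * b j * beta i j
      = - ((b i * b j - b i * a i j - b j * a j i) * beta i j) by ring.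
  by rewrite cond mul0r oppr0.
rewrite A3.
under eq_bigr do rewrite A1 A2.
have E : forall i, b i * (bil M (Zx i) (Ty i) - t * \sum_(j < k) a i j * beta j i
       + (- bil M (Zy i) (Tx i) - t * \sum_(j < k) a i j * beta i j))
     = b i * (bil M (Zx i) (Ty i) - bil M (Zy i) (Tx i))
       - t * (b i * \sum_(j < k) a i j * beta j i + b i * \sum_(j < k) a i j * beta i j).
  by move=> i; ring.
under eq_bigr do rewrite E.
rewrite sumrB -mulr_sumr big_split /= -A4.
ring.
Qed.
Lemma bil_eq K L H1 H2 (c1 c2 : R) x T X z :
  c1 *: (K *m T) + c1 *: (L *m X) = c1 *: (H1 *m z) + c2 *: (H2 *m z) ->
  c1 * (bil K x T + bil L x X) = c1 * bil H1 x z + c2 * bil H2 x z.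
Proof.
move=> E; rewrite bil_mats.
have -> : c1 * (x^T *m (K *m T + L *m X)) 0 0 = (x^T *m (c1 *: (K *m T + L *m X))) 0 0.
  by rewrite -scalemxAr [RHS]mxE.
rewrite scalerDr E mulmxDr -!scalemxAr /bil !mulmxA.
by rewrite [LHS]mxE [X in X + _ = _]mxE [X in _ + X = _]mxE.
Qed.
Lemma final_sym K L H1 H2 (tau w : R) Zx Zy Tx Ty Xx Xy :
  tau != 0 -> H1^T = H1 -> H2^T = H2 ->
  tau *: (K *m Tx) + tau *: (L *m Xx) = tau *: (H1 *m Zx) + w *: (H2 *m Zx) ->
  tau *: (K *m Ty) + tau *: (L *m Xy) = tau *: (H1 *m Zy) + w *: (H2 *m Zy) ->
  (bil K Zx Ty - bil K Zy Tx) + (bil L Zx Xy - bil L Zy Xx) = 0.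
Proof.
move=> t0 hs1 hs2 ex ey.
have e1 := @bil_eq _ _ _ _ _ _ Zx _ _ _ ey.
have e2 := @bil_eq _ _ _ _ _ _ Zy _ _ _ ex.
have H : tau * ((bil K Zx Ty - bil K Zy Tx) + (bil L Zx Xy - bil L Zy Xx)) = 0.
  have -> : tau * ((bil K Zx Ty - bil K Zy Tx) + (bil L Zx Xy - bil L Zy Xx))
      = tau * (bil K Zx Ty + bil L Zx Xy) - tau * (bil K Zy Tx + bil L Zy Xx) by ring.
  rewrite e1 e2 (@bil_sym H1 Zy Zx hs1) (@bil_sym H2 Zy Zx hs2); ring.
by move/eqP: H; rewrite mulf_eq0 (negbTE t0) /= => /eqP.
Qed.

Lemma form2_bil (V : normedModType R) (z : V -> 'cV[R]_n) M (theta xi eta : V) :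
  M^T = - M -> form2 z M theta xi eta = 2 * bil M ('d z theta xi) ('d z theta eta).
Proof.
move=> HM; rewrite /form2 wedge_bil.
rewrite [X in _ - X](bil_skew _ _ _ HM) opprK; ring.
Qed.
End Bil.

Lemma combine (R : realType) (p q : nat) (bt : 'I_p -> R) (b : 'I_q -> R) (t h : R)
  (D1 D2 : 'I_p -> 'I_q -> R) : t != 0 -> h != 0 ->
  (\sum_(m < p) bt m * (t * \sum_(k < q) b k * D1 m k)) / t
  + (\sum_(k < q) b k * (h * \sum_(m < p) bt m * D2 m k)) / h
  = \sum_(m < p) \sum_(k < q) bt m * b k * (D1 m k + D2 m k).
Proof.
move=> t0 h0.
rewrite !mulr_suml.
have -> : \sum_(k < q) b k * (h * \sum_(m < p) bt m * D2 m k) / h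
    = \sum_(m < p) \sum_(k < q) bt m * b k * D2 m k.
  rewrite [RHS]exchange_big /=; apply: eq_bigr => k _.
  rewrite mulrCA mulrAC mulfV // mul1r mulr_sumr.
  by apply: eq_bigr => m _; ring.
have -> : \sum_(m < p) bt m * (t * \sum_(k < q) b k * D1 m k) / t
    = \sum_(m < p) \sum_(k < q) bt m * b k * D1 m k.
  apply: eq_bigr => m _.
  rewrite mulrCA mulrAC mulfV // mul1r mulr_sumr.
  by apply: eq_bigr => k _; ring.
rewrite -big_split; apply: eq_bigr => m _; rewrite -big_split.
apply: eq_bigr => k _ /=. by rewrite mulrDr.
Qed.


Arguments hess {R n}.
Arguments bil {R n}.

Lemma hess_sym (R : realType) (n : nat) (S : 'cV[R]_n -> R) (z : 'cV[R]_n) :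
  smooth S -> (hess S z)^T = hess S z.
Proof.
move=> HS; apply/matrixP => a b; rewrite !mxE.
apply: clairaut => y.
- exact: (HS [::] y).
- exact: (HS [:: delta_mx b 0] y).
- exact: (HS [:: delta_mx a 0] y).
- exact: (HS [:: delta_mx a 0; delta_mx b 0] y).
- exact: (HS [:: delta_mx b 0; delta_mx a 0] y).
Qed.

Theorem mainTheorem1
  (R : realType) (n r s : nat) (K L : 'M[R]_n) (S1 S2 : 'cV[R]_n -> R)
  (a : 'M[R]_r) (b : 'I_r -> R) (ta : 'M[R]_s) (bt : 'I_s -> R)
  (tau h : R)
  (V : normedModType R)
  (dW : 'I_s -> 'I_r -> R)
  (Z dtZ dxZ : 'I_s -> 'I_r -> V -> 'cV[R]_n)
  (zp zp1 : 'I_s -> V -> 'cV[R]_n)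
  (zi zi1 : 'I_r -> V -> 'cV[R]_n) :
  (2 <= n)%N -> (0 < r)%N -> (0 < s)%N ->
  K^T = - K -> L^T = - L ->
  smooth S1 -> smooth S2 ->
  0 < tau -> 0 < h ->
  (forall k j : 'I_r, b k * b j - b k * a k j - b j * a j k = 0) ->
  (forall m l : 'I_s, bt m * bt l - bt m * ta m l - bt l * ta l m = 0) ->
  (* all quantities are differentiable functions of the initial data *)
  (forall m k theta, differentiable (Z m k) theta) ->
  (forall m k theta, differentiable (dtZ m k) theta) ->
  (forall m k theta, differentiable (dxZ m k) theta) ->
  (forall m theta, differentiable (zp m) theta) ->
  (forall m theta, differentiable (zp1 m) theta) ->
  (forall k theta, differentiable (zi k) theta) ->
  (forall k theta, differentiable (zi1 k) theta) ->
  (* the stochastic Runge-Kutta relations on the cell *)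
  (forall m k theta,
     Z m k theta = zp m theta + tau *: \sum_(j < r) a k j *: dtZ m j theta) ->
  (forall m theta,
     zp1 m theta = zp m theta + tau *: \sum_(k < r) b k *: dtZ m k theta) ->
  (forall m k theta,
     Z m k theta = zi k theta + h *: \sum_(l < s) ta m l *: dxZ l k theta) ->
  (forall k theta,
     zi1 k theta = zi k theta + h *: \sum_(m < s) bt m *: dxZ m k theta) ->
  (forall m k theta,
     tau *: (K *m dtZ m k theta) + tau *: (L *m dxZ m k theta)
     = tau *: grad S1 (Z m k theta) + dW m k *: grad S2 (Z m k theta)) ->
  (* conclusion: discrete stochastic multi-symplectic conservation law *)
  forall theta xi eta : V,
    let omega (z : 'I_s -> V -> 'cV[R]_n) :=
      2^-1 * \sum_(m < s) bt m * form2 (z m) K theta xi eta in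
    let kappa (z : 'I_r -> V -> 'cV[R]_n) :=
      2^-1 * \sum_(k < r) b k * form2 (z k) L theta xi eta in
    (omega zp1 - omega zp) / tau + (kappa zi1 - kappa zi) / h = 0.

Proof.
move=> n2 r0 s0 skK skL HS1 HS2 tau0 h0 condb condbt DZ DdtZ DdxZ Dzp Dzp1 Dzi Dzi1
  HZp Hzp1 HZi Hzi1 Heq theta xi eta omega kappa.
have om : forall (M : 'M[R]_n) (p : nat) (w : 'I_p -> R) (z : 'I_p -> V -> 'cV[R]_n),
  M^T = - M ->
  2^-1 * \sum_(m < p) w m * form2 (z m) M theta xi eta
  = \sum_(m < p) w m * bil M ('d (z m) theta xi) ('d (z m) theta eta).
  move=> M p w z HM; rewrite mulr_sumr; apply: eq_bigr => m _.
  by rewrite (form2_bil _ _ _ _ _ _ _ _ HM) mulrCA mulKf // pnatr_eq0.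
rewrite /omega /kappa; cbv beta.
have red : forall (A1 A0 B1 B0 A1' A0' B1' B0' : R), A1 = A1' -> A0 = A0' -> B1 = B1' -> B0 = B0' ->
  (A1' - A0') / tau + (B1' - B0') / h = 0 -> (A1 - A0) / tau + (B1 - B0) / h = 0.
  by move=> ? ? ? ? ? ? ? ? -> -> -> ->.
apply: (red _ _ _ _ _ _ _ _ (om K s bt zp1 skK) (om K s bt zp skK) (om L r b zi1 skL) (om L r b zi skL)).
have rp : forall m d, 'd (zp1 m) theta d
   = 'd (zp m) theta d + tau *: \sum_(k < r) b k *: 'd (dtZ m k) theta d.
  move=> m d; apply: (@rel_vec R V n r (zp1 m) (zp m) tau b (dtZ m) theta d).
  - exact: Hzp1.
  - exact: Dzp1.
  - exact: Dzp.
  - by move=> k; exact: DdtZ.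
have rZp : forall m k d, 'd (Z m k) theta d
   = 'd (zp m) theta d + tau *: \sum_(j < r) a k j *: 'd (dtZ m j) theta d.
  move=> m k d; apply: (@rel_vec R V n r (Z m k) (zp m) tau (a k) (dtZ m) theta d).
  - exact: HZp.
  - exact: DZ.
  - exact: Dzp.
  - by move=> j; exact: DdtZ.
have ri1 : forall k d, 'd (zi1 k) theta d
   = 'd (zi k) theta d + h *: \sum_(m < s) bt m *: 'd (dxZ m k) theta d.
  move=> k d; apply: (@rel_vec R V n s (zi1 k) (zi k) h bt (fun m => dxZ m k) theta d).
  - exact: Hzi1.
  - exact: Dzi1.
  - exact: Dzi.
  - by move=> m; exact: DdxZ.
have rZi : forall m k d, 'd (Z m k) theta d
   = 'd (zi k) theta d + h *: \sum_(l < s) ta m l *: 'd (dxZ l k) theta d.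
  move=> m k d; apply: (@rel_vec R V n s (Z m k) (zi k) h (ta m) (fun l => dxZ l k) theta d).
  - exact: HZi.
  - exact: DZ.
  - exact: Dzi.
  - by move=> l; exact: DdxZ.
have oms : forall m : 'I_s,
  bil K ('d (zp1 m) theta xi) ('d (zp1 m) theta eta)
  - bil K ('d (zp m) theta xi) ('d (zp m) theta eta)
  = tau * \sum_(k < r) b k * (bil K ('d (Z m k) theta xi) ('d (dtZ m k) theta eta)
                            - bil K ('d (Z m k) theta eta) ('d (dtZ m k) theta xi)).
  move=> m.
  exact: (@rk_step R n K r b a tau _ _ _ _
    (fun k => 'd (Z m k) theta xi) (fun k => 'd (Z m k) theta eta)
    (fun k => 'd (dtZ m k) theta xi) (fun k => 'd (dtZ m k) theta eta)
    skK condb (rp m xi) (rp m eta) (fun k => rZp m k xi) (fun k => rZp m k eta)).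
have kas : forall k : 'I_r,
  bil L ('d (zi1 k) theta xi) ('d (zi1 k) theta eta)
  - bil L ('d (zi k) theta xi) ('d (zi k) theta eta)
  = h * \sum_(m < s) bt m * (bil L ('d (Z m k) theta xi) ('d (dxZ m k) theta eta)
                            - bil L ('d (Z m k) theta eta) ('d (dxZ m k) theta xi)).
  move=> k.
  exact: (@rk_step R n L s bt ta h _ _ _ _
    (fun m => 'd (Z m k) theta xi) (fun m => 'd (Z m k) theta eta)
    (fun m => 'd (dxZ m k) theta xi) (fun m => 'd (dxZ m k) theta eta)
    skL condbt (ri1 k xi) (ri1 k eta) (fun m => rZi m k xi) (fun m => rZi m k eta)).
have dq : forall (m : 'I_s) (k : 'I_r) d,
  tau *: (K *m 'd (dtZ m k) theta d) + tau *: (L *m 'd (dxZ m k) theta d)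
  = tau *: (hess S1 (Z m k theta) *m 'd (Z m k) theta d)
    + dW m k *: (hess S2 (Z m k theta) *m 'd (Z m k) theta d).
  move=> m k d.
  exact: (@deq R V n K L S1 S2 tau (dW m k) (dtZ m k) (dxZ m k) (Z m k) theta d
    HS1 HS2 (DdtZ m k theta) (DdxZ m k theta) (DZ m k theta) (Heq m k)).
have red2 : forall (A1 A0 B1 B0 A' B' : R), A1 - A0 = A' -> B1 - B0 = B' ->
  A' / tau + B' / h = 0 -> (A1 - A0) / tau + (B1 - B0) / h = 0.
  by move=> ? ? ? ? ? ? -> ->.
pose D1 := fun (m : 'I_s) (k : 'I_r) =>
  bil K ('d (Z m k) theta xi) ('d (dtZ m k) theta eta)
  - bil K ('d (Z m k) theta eta) ('d (dtZ m k) theta xi).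
pose D2 := fun (m : 'I_s) (k : 'I_r) =>
  bil L ('d (Z m k) theta xi) ('d (dxZ m k) theta eta)
  - bil L ('d (Z m k) theta eta) ('d (dxZ m k) theta xi).
apply: (red2 _ _ _ _ (\sum_(m < s) bt m * (tau * \sum_(k < r) b k * D1 m k))
                     (\sum_(k < r) b k * (h * \sum_(m < s) bt m * D2 m k))).
- rewrite -sumrB; apply: eq_bigr => m _.
  rewrite -mulrBr; congr (_ * _); exact: oms.
- rewrite -sumrB; apply: eq_bigr => k _.
  rewrite -mulrBr; congr (_ * _); exact: kas.
apply: (etrans (combine _ _ _ _ _ _ _ D1 D2 (negbT (gt_eqF tau0)) (negbT (gt_eqF h0)))).
apply: big1 => m _; apply: big1 => k _.
have F := @final_sym R n K L _ _ tau (dW m k) _ _ _ _ _ _ (negbT (gt_eqF tau0))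
  (hess_sym _ _ _ _ HS1) (hess_sym _ _ _ _ HS2) (dq m k xi) (dq m k eta).
exact: (etrans (congr1 (fun t => bt m * b k * t) F) (mulr0 _)).
Qed.
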